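(* Let $p=a/b$ with $a,b$ positive coprime integers and $b\not\equiv 0\pmod 4$, and set $k'=b$ if $b$ is even, $k'=2b$ if $b$ is odd. Let $(\Delta_L^{(m)})_{m\ge 1}$ satisfy $\Delta_L^{(m+1)}=\Delta_L^{(m)}+1+2p-2\lceil\Delta_L^{(m)}\rceil$ for all $m\ge1$, with $0<|\Delta_L^{(1)}|<1/k'$. Writing $d(t)=\left|\left((t+\tfrac12)\bmod 1\right)-\tfrac12\right|$ for the distance from $t\in\mathbb{R}$ to the nearest integer, we have $$d\big(\Delta_L^{(m)}\big)>\frac{1}{k'}\quad\text{for all } m\in\{2,\dots,k'/2\}\cup\{k'/2+2,\dots,k'\},$$ and $$d\big(\Delta_L^{(k'/2+1)}\big)<\frac{1}{k'} .$$
   Context: $\lceil\cdot\rceil$ denotes the ceiling function and $t\bmod 1\in[0,1)$ the fractional part. Note $k'$ is always even. *)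

(* Defs.v *)
From Stdlib Require Export Reals Lra Lia Arith.
Open Scope R_scope.

(* Ceiling: ceil x is the least integer >= x.
   Stdlib's [up y] is the unique integer with y < up y <= y + 1,
   so ceil x = - floor(-x) = 1 - up(-x). *)
Definition ceilR (x : R) : Z := (1 - up (- x))%Z.

(* fractional part t mod 1 in [0,1): t - floor t  (Stdlib: frac_part = x - Int_part x) *)
Definition fracR (t : R) : R := t - IZR (up t - 1).

Definition dist_int (t : R) : R := Rabs (fracR (t + 1/2) - 1/2).

Definition kprime (b : nat) : nat := if Nat.even b then b else (2 * b)%nat.

(* Main.v *)
Require Import Defs.
From Stdlib Require Import Reals Lra Lia Arith ZArith Znumtheory.
Open Scope R_scope.

Lemma dist_spec t : exists N:Z, dist_int t = Rabs (t - IZR N) /\ -1/2 <= t - IZR N < 1/2.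
Proof.
  unfold dist_int, fracR. exists (up (t+1/2) - 1)%Z.
  destruct (archimed (t+1/2)). rewrite minus_IZR. split.
  - f_equal; ring.
  - lra.
Qed.

Lemma dist_le t K : dist_int t <= Rabs (t - IZR K).
Proof.
  destruct (dist_spec t) as [N [E B]]. rewrite E.
  destruct (Z.eq_dec N K) as [->|ne]. lra.
  assert (H: (N-K >= 1 \/ N - K <= -1)%Z) by lia.
  destruct H as [H|H]; [apply IZR_ge in H | apply IZR_le in H]; rewrite minus_IZR in H;
  unfold Rabs; destruct Rcase_abs; destruct Rcase_abs; lra.
Qed.

Lemma dist_gt t e : (forall K, Rabs (t - IZR K) > e) -> dist_int t > e.
Proof.
  intros H. destruct (dist_spec t) as [N [E B]]. rewrite E. apply H.
Qed.

Lemma repr (n c : nat) (D : nat -> R)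
  (hrec : forall m : nat, (1 <= m)%nat ->
     D (S m) = D m + 1 + INR c / INR n - 2 * IZR (ceilR (D m))) :
  forall j, exists z : Z, D (S j) = D 1%nat + INR j * (1 + INR c / INR n) + 2 * IZR z.
Proof.
  induction j as [|j [z IH]].
  - exists 0%Z. simpl. ring.
  - exists (z - ceilR (D (S j)))%Z. rewrite hrec by lia. rewrite IH, S_INR, minus_IZR.
    rewrite <- IH. rewrite IH at 1. ring.
Qed.

Lemma core (n c : nat) (D : nat -> R) (hn : (0 < n)%nat)
  (hrel : rel_prime (Z.of_nat n) (Z.of_nat c))
  (hrec : forall m : nat, (1 <= m)%nat ->
     D (S m) = D m + 1 + INR c / INR n - 2 * IZR (ceilR (D m)))
  (h1 : 0 < Rabs (D 1%nat) < 1 / (2 * INR n)) :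
  (forall m, ((2 <= m <= n)%nat \/ (n + 2 <= m <= 2 * n)%nat) ->
     dist_int (D m) > 1 / (2 * INR n)) /\
  dist_int (D (n + 1)%nat) < 1 / (2 * INR n).
Proof.
  assert (Hn : 0 < INR n) by (apply lt_0_INR; lia).
  split.
  - intros m Hm. destruct m as [|j]; [lia|].
    assert (Hj : (1 <= j <= 2*n - 1)%nat /\ j <> n) by lia.
    destruct (repr n c D hrec j) as [z Hz]. rewrite Hz.
    apply dist_gt. intros K.
    set (w := (Z.of_nat n * (Z.of_nat j + 2*z - K) + Z.of_nat j * Z.of_nat c)%Z).
    assert (Ew : D 1%nat + INR j * (1 + INR c / INR n) + 2 * IZR z - IZR K
                 = D 1%nat + IZR w / INR n).
    { unfold w. rewrite plus_IZR, !mult_IZR, !minus_IZR, plus_IZR, mult_IZR.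
      rewrite <- !INR_IZR_INZ. field. lra. }
    rewrite Ew.
    assert (wne : w <> 0%Z).
    { intro w0. assert (Hd : (Z.of_nat n | Z.of_nat c * Z.of_nat j)%Z).
      { exists (- (Z.of_nat j + 2*z - K))%Z. unfold w in w0. lia. }
      apply Gauss in Hd; [|exact hrel].
      destruct Hd as [q Hq].
      assert (q <= 0 \/ q = 1 \/ q >= 2)%Z as [Q|[Q|Q]] by lia.
      - assert (q * Z.of_nat n <= 0)%Z by nia. lia.
      - subst q. lia.
      - assert (q * Z.of_nat n >= 2 * Z.of_nat n)%Z by nia. lia. }
    set (u := 1 / INR n).
    assert (Eu : 1 / (2 * INR n) = u / 2) by (unfold u; field; lra).
    assert (Hu : 0 < u) by (unfold u; apply Rdiv_lt_0_compat; lra).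
    assert (Hx : IZR w / INR n >= u \/ IZR w / INR n <= - u).
    { assert (H: (w >= 1 \/ w <= -1)%Z) by lia.
      destruct H as [H|H]; [apply IZR_ge in H; left | apply IZR_le in H; right];
      unfold u, Rdiv.
      + apply Rle_ge, Rmult_le_compat_r; [apply Rlt_le, Rinv_0_lt_compat; lra| lra].
      + replace (- (1 * / INR n)) with ((-1) * / INR n) by ring.
        apply Rmult_le_compat_r; [apply Rlt_le, Rinv_0_lt_compat; lra| lra]. }
    rewrite Eu in *. revert Hx h1. generalize (IZR w / INR n). intros x Hx Hd.
    unfold Rabs in *; destruct Rcase_abs; destruct Rcase_abs; lra.
  - replace (n + 1)%nat with (S n) by lia.
    destruct (repr n c D hrec n) as [z Hz]. rewrite Hz.
    eapply Rle_lt_trans; [apply (dist_le _ (Z.of_nat n + Z.of_nat c + 2 * z)%Z)|].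
    rewrite !plus_IZR, mult_IZR, <- !INR_IZR_INZ.
    replace (D 1%nat + INR n * (1 + INR c / INR n) + 2 * IZR z -
             (INR n + INR c + 2 * IZR z)) with (D 1%nat) by (field; lra).
    lra.
Qed.

Theorem lemma3 (a b : nat) (D : nat -> R)
  (ha : (0 < a)%nat) (hb : (0 < b)%nat) (hab : Nat.gcd a b = 1%nat)
  (hb4 : (b mod 4 <> 0)%nat)
  (hrec : forall m : nat, (1 <= m)%nat ->
     D (S m) = D m + 1 + 2 * (INR a / INR b) - 2 * IZR (ceilR (D m)))
  (h1 : 0 < Rabs (D 1%nat) < 1 / INR (kprime b)) :
  (forall m : nat,
     ((2 <= m <= kprime b / 2)%nat \/ (kprime b / 2 + 2 <= m <= kprime b)%nat) ->
     dist_int (D m) > 1 / INR (kprime b)) /\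
  dist_int (D (kprime b / 2 + 1)%nat) < 1 / INR (kprime b).
Proof.
  assert (Hg : rel_prime (Z.of_nat a) (Z.of_nat b)).
  { destruct (Nat.gcd_bezout_pos a b ha) as [u [v Huv]]. rewrite hab in Huv.
    constructor; [exists (Z.of_nat a); lia | exists (Z.of_nat b); lia |].
    intros d [x Hx] [y Hy]. exists (Z.of_nat u * x - Z.of_nat v * y)%Z.
    apply (f_equal Z.of_nat) in Huv. rewrite Nat2Z.inj_add, !Nat2Z.inj_mul in Huv.
    rewrite Hx, Hy in Huv. lia. }
  unfold kprime in *. destruct (Nat.even b) eqn:E.
  - apply Nat.even_spec in E. destruct E as [n ->].
    replace (2 * n / 2)%nat with n by (rewrite Nat.mul_comm, Nat.div_mul; lia).
    assert (I2 : INR 2 = 2) by (simpl; lra). rewrite mult_INR, I2 in *.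
    replace (2 * n)%nat with (2 * n)%nat by reflexivity.
    apply (core n a D); [lia| | |exact h1].
    + apply rel_prime_div with (Z.of_nat (2*n)).
      * apply rel_prime_sym; exact Hg.
      * exists 2%Z. lia.
    + intros m Hm. rewrite hrec by lia. f_equal. f_equal. field.
      assert (0 < INR n) by (apply lt_0_INR; lia). lra.
  - assert (E' : Nat.odd b = true) by (rewrite <- Nat.negb_even, E; reflexivity).
    apply Nat.odd_spec in E'. destruct E' as [k Hk].
    replace (2 * b / 2)%nat with b by (rewrite Nat.mul_comm, Nat.div_mul; lia).
    assert (I2 : INR 2 = 2) by (simpl; lra). rewrite mult_INR, I2 in *.
    apply (core b (2*a) D); [lia| | |exact h1].
    + rewrite Nat2Z.inj_mul. apply rel_prime_mult.
      * apply rel_prime_sym, prime_rel_prime; [exact prime_2|].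
        intros [q Hq]. lia.
      * apply rel_prime_sym; exact Hg.
    + intros m Hm. rewrite hrec by lia. rewrite mult_INR, I2.
      f_equal. f_equal. field.
      assert (0 < INR b) by (apply lt_0_INR; lia). lra.
Qed.
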